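(* Let $\mathcal A$ be an abelian category and let $0\to F\to M\to C\to 0$ be a fully invariant short exact sequence in $\mathcal A$. (1) Assume that $M$ is (strongly) self-$F$-split. Then: (i) for every (fully invariant) direct summand $K$ of $M$, $F\cap K$ is a (fully invariant) direct summand of $M$; (ii) $M$ has SIP for (fully invariant) direct summands containing $F$. (2) Assume that $M$ is dual (strongly) self-$F$-split. Then: (i) for every (fully invariant) direct summand $K$ of $M$, $F+K$ is a (fully invariant) direct summand of $M$; (ii) $M$ has SSP for (fully invariant) direct summands contained in $F$.
   Context: Convention: each statement containing parenthetical words holds in two versions: one obtained by deleting all parenthetical words and one obtained by keeping all of them. Let $\mathcal A$ be an abelian category. A morphism $s:X\to Y$ is a section if $ts=1_X$ for some $t$, and a retraction if $st=1_Y$ for some $t$. A monomorphism $i:K\to M$ is fully invariant if for every morphism $h:M\to M$ there is $\alpha:K\to K$ with $hi=i\alpha$; an epimorphism $d:M\to C$ is fully coinvariant if for every $h:M\to M$ there is $\beta:C\to C$ with $dh=\beta d$. A subobject is fully invariant if its inclusion is. A short exact sequence $0\to F\xrightarrow{i}N\xrightarrow{d}C\to 0$ is fully invariant if $i$ is fully invariant. A (fully invariant) direct summand is a subobject whose inclusion is a (fully invariant) section. For an object $M$ and a fully invariant short exact sequence $0\to F\xrightarrow{i}N\xrightarrow{d}C\to 0$: $N$ is (strongly) $M$-$F$-split if for every morphism $g:M\to N$, $\ker(dg)$ is a (fully invariant) section; $N$ is dual (strongly) $M$-$F$-split if for every morphism $g:N\to M$, $\mathrm{coker}(gi)$ is a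 (fully coinvariant) retraction. Self-versions: take $M=N$. An object $M$ has the summand intersection property (SIP) for a class $\mathcal C$ of direct summands of $M$ if the intersection of any finite family of members of $\mathcal C$ belongs to $\mathcal C$; it has the summand sum property (SSP) for $\mathcal C$ if the sum of any finite family of members of $\mathcal C$ belongs to $\mathcal C$. *)

(* Defs.v *)
From HB Require Import structures.
From mathcomp Require Import all_boot all_algebra.
Set Implicit Arguments. Unset Strict Implicit. Unset Printing Implicit Defensive.
Import GRing.Theory.
Local Open Scope ring_scope.

Record cat_data := CatData {
  obj :> Type;
  ahom : obj -> obj -> zmodType;
  acmp : forall (A B D : obj), ahom B D -> ahom A B -> ahom A D;
  idm : forall A : obj, ahom A A }.
Arguments ahom {c}.
Arguments acmp {c A B D}.
Arguments idm {c}.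

Section Basic.
Context {C : cat_data}.

Definition is_kernel (A B K : C) (f : ahom A B) (k : ahom K A) : Prop :=
  acmp f k = 0 /\
  forall (X : C) (x : ahom X A), acmp f x = 0 ->
    exists! u : ahom X K, acmp k u = x.

Definition is_cokernel (A B Q : C) (f : ahom A B) (c : ahom B Q) : Prop :=
  acmp c f = 0 /\
  forall (X : C) (x : ahom B X), acmp x f = 0 ->
    exists! u : ahom Q X, acmp u c = x.

Definition mono (A B : C) (f : ahom A B) : Prop :=
  forall (X : C) (g h : ahom X A), acmp f g = acmp f h -> g = h.

Definition epi (A B : C) (f : ahom A B) : Prop :=
  forall (X : C) (g h : ahom B X), acmp g f = acmp h f -> g = h.

Definition is_abelian : Prop :=
  (forall (A B D E : C) (f : ahom D E) (g : ahom B D) (h : ahom A B),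
      acmp f (acmp g h) = acmp (acmp f g) h) /\
  (forall (A B : C) (f : ahom A B), acmp (idm B) f = f /\ acmp f (idm A) = f) /\
  (forall (A B D : C) (f f' : ahom B D) (g : ahom A B),
      acmp (f + f') g = acmp f g + acmp f' g) /\
  (forall (A B D : C) (f : ahom B D) (g g' : ahom A B),
      acmp f (g + g') = acmp f g + acmp f g') /\
  (exists Z : C, forall A : C,
      (forall f g : ahom Z A, f = g) /\ (forall f g : ahom A Z, f = g)) /\
  (forall A B : C, exists (S : C) (i1 : ahom A S) (i2 : ahom B S)
      (p1 : ahom S A) (p2 : ahom S B),
      [/\ acmp p1 i1 = idm A, acmp p2 i2 = idm B, acmp p1 i2 = 0,
          acmp p2 i1 = 0 & acmp i1 p1 + acmp i2 p2 = idm S]) /\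
  (forall (A B : C) (f : ahom A B), exists (K : C) (k : ahom K A), is_kernel f k) /\
  (forall (A B : C) (f : ahom A B), exists (Q : C) (c : ahom B Q), is_cokernel f c) /\
  (forall (A B : C) (m : ahom A B), mono m ->
      exists (D : C) (f : ahom B D), is_kernel f m) /\
  (forall (A B : C) (e : ahom A B), epi e ->
      exists (D : C) (f : ahom D A), is_cokernel f e).

End Basic.
Arguments is_abelian : clear implicits.

Record abelian_category := AbelianCategory {
  acat :> cat_data;
  acat_ax : is_abelian acat }.

Section Notions.
Context {C : cat_data}.

Definition section (X Y : C) (s : ahom X Y) : Prop :=
  exists t : ahom Y X, acmp t s = idm X.

Definition retraction (X Y : C) (s : ahom X Y) : Prop :=
  exists t : ahom Y X, acmp s t = idm Y.

Definition fully_invariant (K M : C) (i : ahom K M) : Prop :=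
  mono i /\ forall h : ahom M M, exists a : ahom K K, acmp h i = acmp i a.

Definition fully_coinvariant (M D : C) (d : ahom M D) : Prop :=
  epi d /\ forall h : ahom M M, exists b : ahom D D, acmp d h = acmp b d.

Definition short_exact (F N Q : C) (i : ahom F N) (d : ahom N Q) : Prop :=
  [/\ mono i, epi d, is_kernel d i & is_cokernel i d].

Definition fi_short_exact (F N Q : C) (i : ahom F N) (d : ahom N Q) : Prop :=
  short_exact i d /\ fully_invariant i.

(* x factors through k, i.e. (as subobjects) x <= k *)
Definition factors_through (X K M : C) (x : ahom X M) (k : ahom K M) : Prop :=
  exists f : ahom X K, acmp k f = x.

(* The boolean [s] selects the version of a statement with parenthetical
   words: [s = false] deletes them, [s = true] keeps them. *)

Definition summand (s : bool) (K M : C) (k : ahom K M) : Prop :=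
  section k /\ (s -> fully_invariant k).

Definition cosummand (s : bool) (M Q : C) (c : ahom M Q) : Prop :=
  retraction c /\ (s -> fully_coinvariant c).

Definition self_split (s : bool) (F M Q : C) (i : ahom F M) (d : ahom M Q) : Prop :=
  forall (g : ahom M M) (K : C) (k : ahom K M), is_kernel (acmp d g) k -> summand s k.

Definition dual_self_split (s : bool) (F M Q : C) (i : ahom F M) (d : ahom M Q) : Prop :=
  forall (g : ahom M M) (D : C) (c : ahom M D), is_cokernel (acmp g i) c -> cosummand s c.

Definition is_meet (M : C) (I : finType) (K : I -> C) (k : forall j, ahom (K j) M)
    (P : C) (p : ahom P M) : Prop :=
  [/\ mono p, (forall j, factors_through p (k j)) &
      forall (X : C) (x : ahom X M), (forall j, factors_through x (k j)) ->
        factors_through x p].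

Definition is_join (M : C) (I : finType) (K : I -> C) (k : forall j, ahom (K j) M)
    (P : C) (p : ahom P M) : Prop :=
  [/\ mono p, (forall j, factors_through (k j) p) &
      forall (X : C) (x : ahom X M), mono x -> (forall j, factors_through (k j) x) ->
        factors_through p x].

Definition is_meet2 (A B M P : C) (a : ahom A M) (b : ahom B M) (p : ahom P M) : Prop :=
  [/\ mono p, factors_through p a, factors_through p b &
      forall (X : C) (x : ahom X M), factors_through x a -> factors_through x b ->
        factors_through x p].

Definition is_join2 (A B M P : C) (a : ahom A M) (b : ahom B M) (p : ahom P M) : Prop :=
  [/\ mono p, factors_through a p, factors_through b p &
      forall (X : C) (x : ahom X M), mono x -> factors_through a x ->
        factors_through b x -> factors_through p x].

Definition subclass (M : C) := forall K : C, ahom K M -> Prop.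

Definition SIP (M : C) (Cl : subclass M) : Prop :=
  forall (I : finType) (K : I -> C) (k : forall j, ahom (K j) M),
    (forall j, Cl (K j) (k j)) ->
    forall (P : C) (p : ahom P M), is_meet k p -> Cl P p.

Definition SSP (M : C) (Cl : subclass M) : Prop :=
  forall (I : finType) (K : I -> C) (k : forall j, ahom (K j) M),
    (forall j, Cl (K j) (k j)) ->
    forall (P : C) (p : ahom P M), is_join k p -> Cl P p.

End Notions.

(* Main.v *)
Require Import Defs.
From mathcomp Require Import all_boot all_algebra.
Set Implicit Arguments. Unset Strict Implicit. Unset Printing Implicit Defensive.
Import GRing.Theory.
Local Open Scope ring_scope.

Section Ab.
Variable C : abelian_category.
Local Notation "f ⊚ g" := (acmp f g) (at level 40, left associativity).

Lemma cA (A B D E : C) (f : ahom D E) (g : ahom B D) (h : ahom A B) :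
  f ⊚ (g ⊚ h) = f ⊚ g ⊚ h.
Proof. by case: (acat_ax C) => H _; apply: H. Qed.
Lemma c1l (A B : C) (f : ahom A B) : idm B ⊚ f = f.
Proof. by case: (acat_ax C) => _ [H _]; case: (H _ _ f). Qed.
Lemma c1r (A B : C) (f : ahom A B) : f ⊚ idm A = f.
Proof. by case: (acat_ax C) => _ [H _]; case: (H _ _ f). Qed.
Lemma cDl (A B D : C) (f f' : ahom B D) (g : ahom A B) : (f + f') ⊚ g = f ⊚ g + f' ⊚ g.
Proof. by case: (acat_ax C) => _ [_ [H _]]; apply: H. Qed.
Lemma cDr (A B D : C) (f : ahom B D) (g g' : ahom A B) : f ⊚ (g + g') = f ⊚ g + f ⊚ g'.
Proof. by case: (acat_ax C) => _ [_ [_ [H _]]]; apply: H. Qed.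
Lemma c0l (A B D : C) (g : ahom A B) : (0 : ahom B D) ⊚ g = 0.
Proof.
have E : (0 : ahom B D) ⊚ g + 0 ⊚ g = 0 ⊚ g + 0 by rewrite -cDl !addr0.
exact: addrI E.
Qed.
Lemma c0r (A B D : C) (f : ahom B D) : f ⊚ (0 : ahom A B) = 0.
Proof.
have E : f ⊚ (0 : ahom A B) + f ⊚ 0 = f ⊚ 0 + 0 by rewrite -cDr !addr0.
exact: addrI E.
Qed.
Lemma cNl (A B D : C) (f : ahom B D) (g : ahom A B) : (- f) ⊚ g = - (f ⊚ g).
Proof. by apply/eqP; rewrite -subr_eq0 opprK -cDl addNr c0l. Qed.
Lemma cNr (A B D : C) (f : ahom B D) (g : ahom A B) : f ⊚ (- g) = - (f ⊚ g).
Proof. by apply/eqP; rewrite -subr_eq0 opprK -cDr addNr c0r. Qed.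
Lemma cBl (A B D : C) (f f' : ahom B D) (g : ahom A B) : (f - f') ⊚ g = f ⊚ g - f' ⊚ g.
Proof. by rewrite cDl cNl. Qed.
Lemma cBr (A B D : C) (f : ahom B D) (g g' : ahom A B) : f ⊚ (g - g') = f ⊚ g - f ⊚ g'.
Proof. by rewrite cDr cNr. Qed.

Lemma zero_ex : exists Z : C, forall A : C,
      (forall f g : ahom Z A, f = g) /\ (forall f g : ahom A Z, f = g).
Proof. by case: (acat_ax C) => _ [_ [_ [_ [H _]]]]. Qed.
Lemma biprod_ex (A B : C) : exists (S : C) (i1 : ahom A S) (i2 : ahom B S)
      (p1 : ahom S A) (p2 : ahom S B),
      [/\ p1 ⊚ i1 = idm A, p2 ⊚ i2 = idm B, p1 ⊚ i2 = 0,
          p2 ⊚ i1 = 0 & i1 ⊚ p1 + i2 ⊚ p2 = idm S].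
Proof. by case: (acat_ax C) => _ [_ [_ [_ [_ [H _]]]]]. Qed.
Lemma ker_ex (A B : C) (f : ahom A B) : exists (K : C) (k : ahom K A), is_kernel f k.
Proof. by case: (acat_ax C) => _ [_ [_ [_ [_ [_ [H _]]]]]]. Qed.
Lemma coker_ex (A B : C) (f : ahom A B) : exists (K : C) (k : ahom B K), is_cokernel f k.
Proof. by case: (acat_ax C) => _ [_ [_ [_ [_ [_ [_ [H _]]]]]]]. Qed.
Lemma normal_mono (A B : C) (m : ahom A B) : mono m ->
      exists (D : C) (f : ahom B D), is_kernel f m.
Proof. by case: (acat_ax C) => _ [_ [_ [_ [_ [_ [_ [_ [H _]]]]]]]]; apply: H. Qed.

Lemma ker_mono (A B K : C) (f : ahom A B) (k : ahom K A) : is_kernel f k -> mono k.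
Proof.
move=> [fk0 H] X g h E.
have [u [_ U]] : exists! u, k ⊚ u = k ⊚ g by apply: H; rewrite cA fk0 c0l.
by rewrite -(U g erefl) (U h (esym E)).
Qed.

Lemma ker_fac (A B K X : C) (f : ahom A B) (k : ahom K A) (x : ahom X A) :
  is_kernel f k -> f ⊚ x = 0 -> exists u, k ⊚ u = x.
Proof. by move=> [_ H] /H [u [Hu _]]; exists u. Qed.

Lemma coker_fac (A B Q X : C) (f : ahom A B) (c : ahom B Q) (x : ahom B X) :
  is_cokernel f c -> x ⊚ f = 0 -> exists u, u ⊚ c = x.
Proof. by move=> [_ H] /H [u [Hu _]]; exists u. Qed.

Lemma mono_comp (A B D : C) (f : ahom B D) (g : ahom A B) :
  mono f -> mono g -> mono (f ⊚ g).
Proof. by move=> mf mg X x y; rewrite -!cA => /mf /mg. Qed.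

Lemma section_mono (A B : C) (f : ahom A B) : section f -> mono f.
Proof. by move=> [t Ht] X x y E; rewrite -(c1l x) -(c1l y) -Ht -!cA E. Qed.

Lemma mono_ker_coker (A B Q : C) (a : ahom A B) (c : ahom B Q) :
  mono a -> is_cokernel a c -> is_kernel c a.
Proof.
move=> ma Hc; have [D [f Hf]] := normal_mono ma.
have [f' Hf'] := coker_fac Hc (proj1 Hf).
split; first exact: (proj1 Hc).
by move=> X x cx; apply: (proj2 Hf); rewrite -Hf' -cA cx c0r.
Qed.

Lemma mono_fac (A B Q X : C) (a : ahom A B) (c : ahom B Q) (x : ahom X B) :
  mono a -> is_cokernel a c -> c ⊚ x = 0 -> exists u, a ⊚ u = x.
Proof. by move=> ma Hc; apply: ker_fac; apply: mono_ker_coker. Qed.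


Lemma idem_fac (A B X : C) (a : ahom A B) (ra : ahom B A) (x : ahom X A) :
  ra ⊚ a = idm A -> a ⊚ ra ⊚ (a ⊚ x) = a ⊚ x.
Proof. by move=> H; rewrite -cA (cA ra) H c1l. Qed.

Lemma proj_kill (A B X : C) (a : ahom A B) (ra : ahom B A) (x : ahom X A) :
  ra ⊚ a = idm A -> (idm B - a ⊚ ra) ⊚ (a ⊚ x) = 0.
Proof. by move=> H; rewrite cBl c1l idem_fac // subrr. Qed.

Lemma meet2_section s (F M Q : C) (i : ahom F M) (d : ahom M Q) (A B P : C)
  (a : ahom A M) (b : ahom B M) (p : ahom P M) (ra : ahom M A) (rb : ahom M B)
  (cb : ahom F B) :
  is_kernel d i -> self_split s i d -> ra ⊚ a = idm A -> rb ⊚ b = idm B ->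
  b ⊚ cb = i -> is_meet2 a b p -> section p.
Proof.
move=> Hi Hss Ha Hb Hcb [mp [al Hal] [be Hbe] Hu].
have [L [l Hl]] := ker_ex (d ⊚ ((idm M - b ⊚ rb) ⊚ (a ⊚ ra))).
have [[u Hul] _] := Hss _ L l Hl.
have eap : a ⊚ ra ⊚ p = p by rewrite -Hal idem_fac.
have gp : (idm M - b ⊚ rb) ⊚ (a ⊚ ra) ⊚ p = 0 by rewrite -cA eap -Hbe proj_kill.
have [q Hq] : exists q, l ⊚ q = p by apply: (ker_fac Hl); rewrite -cA gp c0r.
have gl : (idm M - b ⊚ rb) ⊚ (a ⊚ ra) ⊚ l = 0.
  have [y Hy] : exists y, i ⊚ y = (idm M - b ⊚ rb) ⊚ (a ⊚ ra) ⊚ l.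
    by apply: (ker_fac Hi); rewrite cA (proj1 Hl).
  have E : (idm M - b ⊚ rb) ⊚ ((idm M - b ⊚ rb) ⊚ (a ⊚ ra) ⊚ l) =
           (idm M - b ⊚ rb) ⊚ (a ⊚ ra) ⊚ l.
    by rewrite !cA cBr c1r proj_kill // subr0.
  by rewrite -E -Hy -Hcb -cA proj_kill.
have [w Hw] : exists w, p ⊚ w = a ⊚ ra ⊚ l.
  apply: Hu; first by exists (ra ⊚ l); rewrite cA.
  exists (rb ⊚ (a ⊚ ra ⊚ l)).
  move/eqP: gl; rewrite -cA cBl c1l subr_eq0 => /eqP E.
  by rewrite cA -E.
have wq : w ⊚ q = idm P.
  by apply: mp; rewrite c1r cA Hw -cA Hq eap.
by exists (w ⊚ u); rewrite -cA -Hq (cA u) Hul c1l.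
Qed.


Lemma zero_of_ker_full (P Y M : C) (p : ahom P M) (f : ahom P Y) : mono p ->
  (forall (Z : C) (z : ahom Z P), is_kernel f z -> factors_through p (p ⊚ z)) ->
  f = 0.
Proof.
move=> mp H; have [Z [z Hz]] := ker_ex f; have [w Hw] := H Z z Hz.
have zw : z ⊚ w = idm P by apply: mp; rewrite c1r cA Hw.
by rewrite -(c1r f) -zw cA (proj1 Hz) c0l.
Qed.

Lemma coker_split_fac (A M D P : C) (f : ahom A M) (c : ahom M D) (v : ahom D M)
  (p : ahom P M) (f' : ahom A P) :
  is_cokernel f c -> c ⊚ v = idm D -> mono p -> p ⊚ f' = f ->
  exists y, p ⊚ y = idm M - v ⊚ c.
Proof.
move=> Hc cv mp Hf.
have [Qp [cp Hcp]] := coker_ex p.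
have [z Hz] : exists z, z ⊚ c = cp.
  by apply: (coker_fac Hc); rewrite -Hf cA (proj1 Hcp) c0l.
apply: (mono_fac mp Hcp).
by rewrite cBr c1r -Hz cA -(cA z c v) cv c1r subrr.
Qed.

Lemma join2_section (A B P M D : C) (a : ahom A M) (b : ahom B M) (p : ahom P M)
  (ra : ahom M A) (c : ahom M D) (v : ahom D M) (y : ahom M P) :
  is_join2 a b p -> ra ⊚ a = idm A -> p ⊚ y = idm M - v ⊚ c ->
  c ⊚ ((idm M - a ⊚ ra) ⊚ b) = 0 -> section p.
Proof.
move=> Hj Ha Hy Hcb; have [mp [al Hal] [be Hbe] Hu] := Hj.
pose r := al ⊚ ra + y ⊚ (idm M - a ⊚ ra).
have pr : p ⊚ r = a ⊚ ra + (idm M - v ⊚ c) ⊚ (idm M - a ⊚ ra).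
  by rewrite /r cDr !cA Hal Hy.
have ka : (idm M - a ⊚ ra) ⊚ a = 0 by rewrite cBl c1l -cA Ha c1r subrr.
have ra_ : r ⊚ a = al.
  by apply: mp; rewrite Hal cA pr cDl -(cA a ra a) Ha c1r -cA ka c0r addr0.
have rb_ : r ⊚ b = be.
  apply: mp; rewrite Hbe cA pr cDl -(cA (idm M - v ⊚ c)) cBl c1l -(cA v c) Hcb c0r subr0.
  by rewrite cBl c1l addrC subrK.
have Jz : r ⊚ p - idm P = 0.
  apply: (zero_of_ker_full mp) => Z z Hz.
  have [a' Ha'] : exists a', z ⊚ a' = al.
    by apply: (ker_fac Hz); rewrite cBl c1l -cA Hal ra_ subrr.
  have [b' Hb'] : exists b', z ⊚ b' = be.
    by apply: (ker_fac Hz); rewrite cBl c1l -cA Hbe rb_ subrr.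
  apply: Hu; first exact: mono_comp mp (ker_mono Hz).
    by exists a'; rewrite -cA Ha'.
  by exists b'; rewrite -cA Hb'.
by exists r; apply/eqP; rewrite -subr_eq0 Jz.
Qed.

Lemma meet2_ex (A B M : C) (a : ahom A M) (b : ahom B M) :
  mono a -> mono b -> exists (P : C) (p : ahom P M), is_meet2 a b p.
Proof.
move=> ma mb; have [Qa [ca Hca]] := coker_ex a; have [X [m Hm]] := ker_ex (ca ⊚ b).
exists X, (b ⊚ m); split.
- exact: mono_comp mb (ker_mono Hm).
- by apply: (mono_fac ma Hca); rewrite cA (proj1 Hm).
- by exists m.
- move=> Y x [y Hy] [z Hz].
  have [w Hw] : exists w, m ⊚ w = z.
    by apply: (ker_fac Hm); rewrite -cA Hz -Hy cA (proj1 Hca) c0l.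
  by exists w; rewrite -cA Hw.
Qed.

Lemma join2_ex (A B M : C) (a : ahom A M) (b : ahom B M) :
  exists (P : C) (p : ahom P M), is_join2 a b p.
Proof.
have [S [i1 [i2 [p1 [p2 [H11 H22 H12 H21 _]]]]]] := biprod_ex A B.
have [D [c Hc]] := coker_ex (a ⊚ p1 + b ⊚ p2).
have [P [p Hp]] := ker_ex c.
have fa : (a ⊚ p1 + b ⊚ p2) ⊚ i1 = a by rewrite cDl -!cA H11 H21 c1r c0r addr0.
have fb : (a ⊚ p1 + b ⊚ p2) ⊚ i2 = b by rewrite cDl -!cA H12 H22 c1r c0r add0r.
exists P, p; split.
- exact: ker_mono Hp.
- by apply: (ker_fac Hp); rewrite -fa cA (proj1 Hc) c0l.
- by apply: (ker_fac Hp); rewrite -fb cA (proj1 Hc) c0l.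
- move=> X x mx [a' Ha'] [b' Hb']; have [Qx [cx Hcx]] := coker_ex x.
  have [z Hz] : exists z, z ⊚ c = cx.
    apply: (coker_fac Hc).
    by rewrite cDr -Ha' -Hb' !cA (proj1 Hcx) !c0l addr0.
  by apply: (mono_fac mx Hcx); rewrite -Hz -cA (proj1 Hp) c0r.
Qed.

Lemma section_transfer (P P0 M : C) (p : ahom P M) (p0 : ahom P0 M) a b :
  mono p -> p0 ⊚ a = p -> p ⊚ b = p0 -> section p0 -> section p.
Proof.
move=> mp Ha Hb [t Ht].
have ba : b ⊚ a = idm P by apply: mp; rewrite c1r cA Hb Ha.
by exists (b ⊚ t); rewrite -cA -Ha (cA t) Ht c1l ba.
Qed.


Lemma meet2C (A B P M : C) (a : ahom A M) (b : ahom B M) (p : ahom P M) :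
  is_meet2 a b p -> is_meet2 b a p.
Proof. by case=> mp fa fb Hu; split => // X x xa xb; apply: Hu. Qed.

Lemma join2C (A B P M : C) (a : ahom A M) (b : ahom B M) (p : ahom P M) :
  is_join2 a b p -> is_join2 b a p.
Proof. by case=> mp fa fb Hu; split => // X x mx xa xb; apply: Hu. Qed.

Lemma inv_from_join (P M : C) (p : ahom P M) (h : ahom M M) : mono p ->
  (forall (Y : C) (cp : ahom M Y) (Z : C) (z : ahom Z P), is_cokernel p cp ->
     is_kernel (cp ⊚ (h ⊚ p)) z -> factors_through p (p ⊚ z)) ->
  exists f, h ⊚ p = p ⊚ f.
Proof.
move=> mp H; have [Y [cp Hcp]] := coker_ex p.
have E := zero_of_ker_full mp (fun Z z => H Y cp Z z Hcp).
by have [u Hu] := mono_fac mp Hcp E; exists u.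
Qed.

Lemma gen_in_ker (P M Y Z A : C) (p : ahom P M) (h : ahom M M) (cp : ahom M Y)
  (z : ahom Z P) (a : ahom A M) (al : ahom A P) (alpha : ahom A A) :
  is_cokernel p cp -> is_kernel (cp ⊚ (h ⊚ p)) z -> p ⊚ al = a ->
  h ⊚ a = a ⊚ alpha -> factors_through a (p ⊚ z).
Proof.
move=> Hcp Hz Hal Hh.
have [a' Ha'] : exists a', z ⊚ a' = al.
  by apply: (ker_fac Hz); rewrite -!cA Hal Hh -Hal !cA (proj1 Hcp) !c0l.
by exists a'; rewrite -cA Ha' Hal.
Qed.

Definition meetS (M : C) (I : finType) (K : I -> C) (k : forall j, ahom (K j) M)
  (S : {set I}) (P : C) (p : ahom P M) : Prop :=
  [/\ mono p, (forall j, j \in S -> factors_through p (k j)) &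
      forall (X : C) (x : ahom X M), (forall j, j \in S -> factors_through x (k j)) ->
        factors_through x p].

Definition joinS (M : C) (I : finType) (K : I -> C) (k : forall j, ahom (K j) M)
  (S : {set I}) (P : C) (p : ahom P M) : Prop :=
  [/\ mono p, (forall j, j \in S -> factors_through (k j) p) &
      forall (X : C) (x : ahom X M), mono x ->
        (forall j, j \in S -> factors_through (k j) x) -> factors_through p x].

Lemma meetS_ex s (F M Q : C) (i : ahom F M) (d : ahom M Q) (I : finType)
  (K : I -> C) (k : forall j, ahom (K j) M) :
  is_kernel d i -> self_split s i d -> (forall j, section (k j)) ->
  (forall j, factors_through i (k j)) ->
  forall S : {set I}, exists (P : C) (p : ahom P M), meetS k S p /\ section p.
Proof.
move=> Hi Hss Hs Hf S.
elim: {S}_.+1 {-2}S (ltnSn #|S|) => // n IH S Hn.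
case: (set_0Vmem S) => [-> | [j jS]].
  exists M, (idm M); split; last by exists (idm M); rewrite c1l.
  split; first by move=> X g h; rewrite !c1l.
    by move=> j; rewrite inE.
  by move=> X x _; exists x; rewrite c1l.
have HS' : (#|S :\ j| < n)%N by move: Hn; rewrite (cardsD1 j S) jS add1n ltnS.
have [P' [p' [[mp' Hf' Hu'] [r' Hr']]]] := IH _ HS'.
have [rb Hrb] := Hs j; have [cb Hcb] := Hf j.
have [P [p Hp]] := meet2_ex mp' (section_mono (Hs j)).
exists P, p; split; last exact: (meet2_section Hi Hss Hr' Hrb Hcb Hp).
case: Hp => mp [a Ha] [b Hb] Hu; split => //.
  move=> j' j'S; case: (eqVneq j' j) => [-> | ne]; first by exists b.
  have : j' \in S :\ j by rewrite !inE ne j'S.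
  by move/Hf' => [c Hc]; exists (c ⊚ a); rewrite cA Hc Ha.
move=> X x Hx; apply: Hu; last exact: Hx j jS.
by apply: Hu' => j' /setD1P [_ ?]; apply: Hx.
Qed.

Lemma joinS_ex s (F M Q : C) (i : ahom F M) (d : ahom M Q) (I : finType)
  (K : I -> C) (k : forall j, ahom (K j) M) :
  dual_self_split s i d -> (forall j, section (k j)) ->
  (forall j, factors_through (k j) i) ->
  forall S : {set I}, exists (P : C) (p : ahom P M), joinS k S p /\ section p.
Proof.
move=> Hds Hs Hf S.
elim: {S}_.+1 {-2}S (ltnSn #|S|) => // n IH S Hn.
case: (set_0Vmem S) => [-> | [j jS]].
  have [Z HZ] := zero_ex.
  exists Z, (0 : ahom Z M); split; last by exists 0; apply: (proj1 (HZ Z)).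
  split; first by move=> X g h _; apply: (proj2 (HZ X)).
    by move=> j; rewrite inE.
  by move=> X x _ _; exists 0; apply: (proj1 (HZ M)).
have HS' : (#|S :\ j| < n)%N by move: Hn; rewrite (cardsD1 j S) jS add1n ltnS.
have [P' [p' [[mp' Hf' Hu'] [r' Hr']]]] := IH _ HS'.
have [rb Hrb] := Hs j; have [cb Hcb] := Hf j.
have [P [p Hp]] := join2_ex p' (k j).
have [D [c Hc]] := coker_ex ((idm M - p' ⊚ r') ⊚ (k j ⊚ rb) ⊚ i).
have [[v Hv] _] := Hds _ D c Hc.
have Hp' := Hp; case: Hp' => mp [al Hal] [be Hbe] Hu.
have [y Hy] : exists y, p ⊚ y = idm M - v ⊚ c.
  apply: (coker_split_fac (f' := be ⊚ (rb ⊚ i) - al ⊚ (r' ⊚ (k j ⊚ (rb ⊚ i)))) Hc Hv mp).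
  by rewrite cBr !cA Hbe Hal !cBl c1l.
have H2 : c ⊚ ((idm M - p' ⊚ r') ⊚ k j) = 0.
  have E : (idm M - p' ⊚ r') ⊚ k j = (idm M - p' ⊚ r') ⊚ (k j ⊚ rb) ⊚ i ⊚ cb.
    by rewrite -!cA Hcb Hrb c1r.
  by rewrite E cA (proj1 Hc) c0l.
exists P, p; split; last exact: (join2_section Hp Hr' Hy H2).
split => //.
  move=> j' j'S; case: (eqVneq j' j) => [-> | ne]; first by exists be.
  have : j' \in S :\ j by rewrite !inE ne j'S.
  by move/Hf' => [f Hf'']; exists (al ⊚ f); rewrite cA Hal Hf''.
move=> X x mx Hx; apply: Hu => //; last exact: Hx j jS.
by apply: Hu' => // j' /setD1P [_ ?]; apply: Hx.
Qed.

End Ab.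

Unset Implicit Arguments.
Close Scope ring_scope.

Theorem corollary3p7 (s : bool) (C : abelian_category) (F M Q : C)
    (i : ahom F M) (d : ahom M Q) :
  fi_short_exact i d ->
  (self_split s i d ->
     (forall (K : C) (k : ahom K M), summand s k ->
        forall (P : C) (p : ahom P M), is_meet2 i k p -> summand s p) /\
     SIP (fun (K : C) (k : ahom K M) => summand s k /\ factors_through i k)) /\
  (dual_self_split s i d ->
     (forall (K : C) (k : ahom K M), summand s k ->
        forall (P : C) (p : ahom P M), is_join2 i k p -> summand s p) /\
     SSP (fun (K : C) (k : ahom K M) => summand s k /\ factors_through k i)).
Proof.
move=> [[mi epd Hker Hcok] fii].
split.
- move=> Hss.
  have [[ri Hri] _] : summand s i.
    by apply: (Hss (idm M) F i); rewrite c1r.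
  split.
  + move=> K k [[rk Hrk] fik] P p Hp; split.
      exact: (meet2_section Hker Hss Hrk Hri (c1r i) (meet2C Hp)).
    move=> sT; case: Hp => mp [a Ha] [b Hb] Hu; split => // h.
    have [al Hal] := proj2 fii h; have [be Hbe] := proj2 (fik sT) h.
    have [f Hf] : factors_through (acmp h p) p.
      apply: Hu.
        by exists (acmp al a); rewrite cA -Hal -cA Ha.
      by exists (acmp be b); rewrite cA -Hbe -cA Hb.
    by exists f.
  + move=> I K k Hk P p Hm.
    have [P0 [p0 [[mp0 Hf0 Hu0] sp0]]] := meetS_ex Hker Hss
      (fun j => proj1 (proj1 (Hk j))) (fun j => proj2 (Hk j)) setT.
    case: Hm => mp Hfp Hup.
    have [a Ha] : factors_through p p0 by apply: Hu0 => j _; apply: Hfp.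
    have [b Hb] : factors_through p0 p by apply: Hup => j; apply: Hf0; rewrite in_setT.
    split; [split|].
    * exact: section_transfer mp Ha Hb sp0.
    * move=> sT; split => // h.
      have [f Hf] : factors_through (acmp h p) p.
        apply: Hup => j.
        have [be Hbe] := proj2 (proj2 (proj1 (Hk j)) sT) h.
        have [c Hc] := Hfp j.
        by exists (acmp be c); rewrite cA -Hbe -cA Hc.
      by exists f.
    * by apply: Hup => j; apply: (proj2 (Hk j)).
- move=> Hds; split.
  + move=> K k [[rk Hrk] fik] P p Hp.
    have [D [c Hc]] := coker_ex (acmp (idm M - acmp k rk)%R i).
    have [[v Hv] _] := Hds _ D c Hc.
    have Hp' := Hp; case: Hp' => mp [al Hal] [be Hbe] Hu.
    have [y Hy] : exists y, acmp p y = (idm M - acmp v c)%R.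
      apply: (coker_split_fac (f' := (al - acmp be (acmp rk i))%R) Hc Hv mp).
      by rewrite cBr Hal cA Hbe cBl c1l cA.
    split; first exact: (join2_section (join2C Hp) Hrk Hy (proj1 Hc)).
    move=> sT; split => // h; apply: (inv_from_join mp) => Y cp Z z Hcp Hz.
    have [a1 Ha1] := proj2 fii h; have [b1 Hb1] := proj2 (fik sT) h.
    apply: Hu.
    * exact: mono_comp mp (ker_mono Hz).
    * exact: (gen_in_ker Hcp Hz Hal Ha1).
    * exact: (gen_in_ker Hcp Hz Hbe Hb1).
  + move=> I K k Hk P p Hj.
    have [P0 [p0 [[mp0 Hf0 Hu0] sp0]]] := joinS_ex Hds
      (fun j => proj1 (proj1 (Hk j))) (fun j => proj2 (Hk j)) setT.
    case: Hj => mp Hfp Hup.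
    have [b Hb] : factors_through p0 p by apply: Hu0 => // j _; apply: Hfp.
    have [a Ha] : factors_through p p0 by apply: Hup => // j; apply: Hf0; rewrite in_setT.
    split; [split|].
    * exact: section_transfer mp Ha Hb sp0.
    * move=> sT; split => // h; apply: (inv_from_join mp) => Y cp Z z Hcp Hz.
      apply: Hup; first exact: mono_comp mp (ker_mono Hz).
      move=> j; have [be Hbe] := proj2 (proj2 (proj1 (Hk j)) sT) h.
      have [c Hc] := Hfp j.
      exact: (gen_in_ker Hcp Hz Hc Hbe).
    * by apply: Hup => // j; apply: (proj2 (Hk j)).
Qed.
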